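(* Let $\mathbb{F}$ be a field with $\operatorname{char}\mathbb{F}\neq 2$, let $\xi,\eta\in\mathbb{F}\setminus\{0,1\}$ with $\xi\neq\eta$, and let $M$ be an axial decomposition algebra of Majorana type $(\xi,\eta)$. Then $M$ is dihedral if and only if $M$ is generated (as an algebra) by two axes and there exists an automorphism of $M$ which interchanges these two generating axes.
   Context: $M$ is a commutative nonassociative algebra over $\mathbb{F}$. Let $\Phi:\{0,1,2,3\}\to\mathbb{F}$ with $\Phi(0)=0$, $\Phi(1)=1$, $\Phi(2)=\xi$, $\Phi(3)=\eta$. An element $a\in M$ is an axis (with parameters $\Phi$) if it comes with a decomposition $M=\bigoplus_{i=0}^3 M^i(a)$ (part of the data of the axis) such that: (1) $xa=\Phi(i)x$ for all $x\in M^i(a)$; (2) $M^1(a)=\mathbb{F}a$; (3) $M^0(a)M^i(a)\subset M^i(a)$ for all $i$, $M^2(a)M^2(a)\subset M^0(a)\oplus M^1(a)$, $M^2(a)M^3(a)\subset M^3(a)$ and $M^3(a)M^3(a)\subset M^0(a)\oplus M^1(a)\oplus M^2(a)$. $M$ is an axial decomposition algebra of Majorana type $(\xi,\eta)$ if it has such an axis. For an axis $a$, its Miyamoto involution $\tau(a)$ is the automorphism of $M$ acting as the identity on $M^0(a)\oplus M^1(a)\oplus M^2(a)$ and as $-1$ on $M^3(a)$. $M$ is called dihedral if it is equipped with a sequence of axes $(a_i)_{i\in\mathbb{Z}}$ such that (D1) $M$ is generated as an algebra by the $a_i$; (D2) $a_i\mapsto a_{i+1}$ (for all $i$) extends to an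 automorphism of $M$; (D3) for every $j\in\mathbb{Z}$, the Miyamoto involution $\tau(a_j)$ maps $a_i$ to $a_{2j-i}$ for all $i$. *)

(* Defs.v *)
From HB Require Import structures.
From mathcomp Require Import all_boot all_order all_algebra.
Set Implicit Arguments. Unset Strict Implicit. Unset Printing Implicit Defensive.
Import GRing.Theory.
Local Open Scope ring_scope.

Section Axial.
Variables (F : fieldType) (V : lmodType F) (mul : V -> V -> V).

Definition is_cna : Prop :=
  (forall c x y z, mul (c *: x + y) z = c *: mul x z + mul y z) /\
  (forall x y, mul x y = mul y x).

Definition is_subspace (U : V -> Prop) : Prop :=
  U 0 /\ (forall x y, U x -> U y -> U (x + y)) /\ (forall c x, U x -> U (c *: x)).

Record decomp := Decomp { M0 : V -> Prop; M1 : V -> Prop; M2 : V -> Prop; M3 : V -> Prop }.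

Definition is_direct_decomp (D : decomp) : Prop :=
  [/\ [/\ is_subspace (M0 D), is_subspace (M1 D), is_subspace (M2 D) & is_subspace (M3 D)],
      (forall x, exists x0 x1 x2 x3,
         [/\ M0 D x0, M1 D x1, M2 D x2, M3 D x3 & x = x0 + x1 + x2 + x3]) &
      (forall x0 x1 x2 x3, M0 D x0 -> M1 D x1 -> M2 D x2 -> M3 D x3 ->
         x0 + x1 + x2 + x3 = 0 -> [/\ x0 = 0, x1 = 0, x2 = 0 & x3 = 0])].

Definition prod_in (A B C : V -> Prop) : Prop :=
  forall x y, A x -> B y -> C (mul x y).

Definition sum2 (A B : V -> Prop) : V -> Prop :=
  fun x => exists y z, A y /\ B z /\ x = y + z.

(* a is an axis with parameters Phi = (0 |-> 0, 1 |-> 1, 2 |-> xi, 3 |-> eta)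
   and decomposition D. *)
Definition is_axis (xi eta : F) (a : V) (D : decomp) : Prop :=
  [/\ is_direct_decomp D,
      [/\ (forall x, M0 D x -> mul x a = 0),
          (forall x, M1 D x -> mul x a = x),
          (forall x, M2 D x -> mul x a = xi *: x) &
          (forall x, M3 D x -> mul x a = eta *: x)],
      (forall x, M1 D x <-> exists c : F, x = c *: a) &
      [/\ [/\ prod_in (M0 D) (M0 D) (M0 D), prod_in (M0 D) (M1 D) (M1 D),
          prod_in (M0 D) (M2 D) (M2 D) & prod_in (M0 D) (M3 D) (M3 D)],
          prod_in (M2 D) (M2 D) (sum2 (M0 D) (M1 D)),
          prod_in (M2 D) (M3 D) (M3 D) &
          prod_in (M3 D) (M3 D) (sum2 (sum2 (M0 D) (M1 D)) (M2 D))]].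

(* f is the Miyamoto involution of the decomposition D: the linear map which is
   the identity on M^0 + M^1 + M^2 and -1 on M^3 (it is unique, since
   D is a direct sum decomposition). *)
Definition is_miyamoto (D : decomp) (f : V -> V) : Prop :=
  [/\ (forall c x y, f (c *: x + y) = c *: f x + f y),
      (forall x, M0 D x -> f x = x), (forall x, M1 D x -> f x = x),
      (forall x, M2 D x -> f x = x) & (forall x, M3 D x -> f x = - x)].

Definition is_aut (f : V -> V) : Prop :=
  [/\ (forall c x y, f (c *: x + y) = c *: f x + f y), bijective f &
      (forall x y, f (mul x y) = mul (f x) (f y))].

Definition generates (S : V -> Prop) : Prop :=
  forall U : V -> Prop, is_subspace U -> prod_in U U U ->
    (forall x, S x -> U x) -> forall x, U x.

Definition is_axial_decomp_majorana (xi eta : F) : Prop :=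
  exists a D, is_axis xi eta a D.

Definition is_dihedral (xi eta : F) : Prop :=
  exists (a : int -> V) (D : int -> decomp),
    [/\ (forall i, is_axis xi eta (a i) (D i)),
        generates (fun x => exists i, x = a i),
        (exists phi, is_aut phi /\ forall i, phi (a i) = a (i + 1)) &
        (forall j tau, is_miyamoto (D j) tau ->
                      forall i, tau (a i) = a (2 * j - i))].

End Axial.

(* Main.v *)
Require Import Defs.
From HB Require Import structures.
From mathcomp Require Import all_boot all_order all_algebra.
From mathcomp Require Import ring zify.
Set Implicit Arguments. Unset Strict Implicit. Unset Printing Implicit Defensive.
Import GRing.Theory.
Local Open Scope ring_scope.

Section Basics.
Variables (F : fieldType) (V : lmodType F) (mul : V -> V -> V).
Hypothesis cna : is_cna mul.

Definition linf (f : V -> V) := forall c x y, f (c *: x + y) = c *: f x + f y.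
Definition multf (f : V -> V) := forall x y, f (mul x y) = mul (f x) (f y).

Lemma lin0 f : linf f -> f 0 = 0.
Proof.
move=> hf; have := hf (-1) 0 0.
by rewrite scaleN1r oppr0 addr0 => /eqP; rewrite scaleN1r addNr => /eqP.
Qed.
Lemma linD f : linf f -> forall x y, f (x + y) = f x + f y.
Proof. by move=> hf x y; have := hf 1 x y; rewrite !scale1r. Qed.
Lemma linZ f : linf f -> forall c x, f (c *: x) = c *: f x.
Proof. by move=> hf c x; have := hf c x 0; rewrite !addr0 lin0 // addr0. Qed.
Lemma linN f : linf f -> forall x, f (- x) = - f x.
Proof. by move=> hf x; rewrite -scaleN1r linZ // scaleN1r. Qed.
Lemma linB f : linf f -> forall x y, f (x - y) = f x - f y.
Proof. by move=> hf x y; rewrite linD // linN. Qed.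

Lemma linf_comp f g : linf f -> linf g -> linf (fun x => f (g x)).
Proof. by move=> hf hg c x y; rewrite hg hf. Qed.
Lemma multf_comp f g : multf f -> multf g -> multf (fun x => f (g x)).
Proof. by move=> hf hg x y; rewrite hg hf. Qed.

Lemma mulC x y : mul x y = mul y x.
Proof. by case: cna. Qed.
Lemma mul_linl z : linf (fun x => mul x z).
Proof. by case: cna => h _ c x y; apply: h. Qed.
Lemma mul_linr z : linf (fun x => mul z x).
Proof. by move=> c x y; rewrite !(mulC z); apply: mul_linl. Qed.
Lemma mulDl x y z : mul (x + y) z = mul x z + mul y z.
Proof. exact: (linD (mul_linl z)). Qed.
Lemma mulDr x y z : mul z (x + y) = mul z x + mul z y.
Proof. exact: (linD (mul_linr z)). Qed.
Lemma mulZl c x z : mul (c *: x) z = c *: mul x z.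
Proof. exact: (linZ (mul_linl z)). Qed.
Lemma mulZr c x z : mul z (c *: x) = c *: mul z x.
Proof. exact: (linZ (mul_linr z)). Qed.
Lemma mulNl x z : mul (- x) z = - mul x z.
Proof. exact: (linN (mul_linl z)). Qed.
Lemma mulNr x z : mul z (- x) = - mul z x.
Proof. exact: (linN (mul_linr z)). Qed.

Lemma is_aut_comp f g : is_aut mul f -> is_aut mul g -> is_aut mul (fun x => f (g x)).
Proof.
case=> [fl fb fm] [gl gb gm]; split.
- exact: linf_comp.
- exact: (bij_comp fb gb).
- exact: multf_comp.
Qed.

Lemma sub_lin_closed (U : V -> Prop) : is_subspace U -> forall c x y, U x -> U y -> U (c *: x + y).
Proof. by case=> _ [hD hZ] c x y ux uy; apply: hD => //; apply: (hZ). Qed.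

Lemma sub_sub (U : V -> Prop) : is_subspace U -> forall x y, U x -> U y -> U (x - y).
Proof.
move=> hU x y ux uy; rewrite addrC -scaleN1r; exact: sub_lin_closed.
Qed.

Variables xi eta : F.
Definition ad a x := mul x a.
Definition Qm a x := ad a (ad a (ad a x - xi *: x) - (ad a x - xi *: x)).
Definition kk := 2%:R / (eta * (eta - 1) * (eta - xi)).
Definition Tm a x := x - kk *: Qm a x.

Lemma ad_lin a : linf (ad a).
Proof. exact: mul_linl. Qed.

Lemma linf_subsc f (c : F) : linf f -> linf (fun x => f x - c *: x).
Proof.
move=> hf d x y; rewrite hf scalerDr !scalerA mulrC -!scalerA scalerBr.
by rewrite opprD !addrA; congr (_ + _); rewrite addrAC.
Qed.
Lemma linf_subid f : linf f -> linf (fun x => f x - x).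
Proof.
move=> hf d x y; rewrite hf scalerBr opprD !addrA; congr (_ + _); by rewrite addrAC.
Qed.

Lemma Qm_lin a : linf (Qm a).
Proof.
exact: (linf_comp (ad_lin a) (linf_comp (linf_subid (ad_lin a)) (linf_subsc xi (ad_lin a)))).
Qed.

Lemma linf_id : linf id.
Proof. by []. Qed.
Lemma linf_comb f g c : linf f -> linf g -> linf (fun x => f x - c *: g x).
Proof.
move=> hf hg d x y; rewrite hf hg scalerDr !scalerA mulrC -!scalerA scalerBr.
by rewrite opprD !addrA; congr (_ + _); rewrite addrAC.
Qed.

Lemma Tm_lin a : linf (Tm a).
Proof. exact: (linf_comb kk linf_id (Qm_lin a)). Qed.

Lemma Qm_eig a x l : ad a x = l *: x -> Qm a x = (l * (l - 1) * (l - xi)) *: x.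
Proof.
move=> h; rewrite /Qm h -scalerBl (linZ (ad_lin a)) h scalerA.
rewrite -{2}(scale1r x) !scalerA -scalerBl (linZ (ad_lin a)) h scalerA.
by congr (_ *: _); ring.
Qed.

Lemma Tm_eig a x l : ad a x = l *: x -> Tm a x = (1 - kk * (l * (l - 1) * (l - xi))) *: x.
Proof. by move=> h; rewrite /Tm (Qm_eig h) scalerA scalerBl scale1r. Qed.

Lemma Tm_fix a x l : ad a x = l *: x -> l * (l - 1) * (l - xi) = 0 -> Tm a x = x.
Proof. by move=> h h0; rewrite (Tm_eig h) h0 mulr0 subr0 scale1r. Qed.

Lemma Qm_ad a x : Qm a (ad a x) = ad a (Qm a x).
Proof. by rewrite /Qm !(linB (ad_lin a), linZ (ad_lin a)). Qed.

Lemma Tm_ad a x : Tm a (ad a x) = ad a (Tm a x).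
Proof. by rewrite /Tm Qm_ad (linB (ad_lin a)) (linZ (ad_lin a)). Qed.

Lemma Tm_sub (U : V -> Prop) a x : is_subspace U -> prod_in mul U U U -> U a -> U x -> U (Tm a x).
Proof.
move=> hU hP ua ux.
have hadU y : U y -> U (ad a y) by move=> uy; apply: hP.
have hZ : forall c y, U y -> U (c *: y) by case: hU => _ [].
rewrite /Tm /Qm; apply: sub_sub => //; apply: (hZ); apply: (hadU); apply: sub_sub => //.
  apply: (hadU); apply: sub_sub => //; [exact: hadU | exact: hZ].
apply: sub_sub => //; [exact: hadU | exact: hZ].
Qed.

Section Nondeg.
Hypotheses (eta0 : eta != 0) (eta1 : eta != 1) (xieta : xi != eta).

Lemma kk_eta : kk * (eta * (eta - 1) * (eta - xi)) = 2%:R.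
Proof.
rewrite /kk divfK //; rewrite !mulf_neq0 //; rewrite subr_eq0 //; by rewrite eq_sym.
Qed.

Section Axis.
Variables (a : V) (D : decomp V).
Hypothesis Ha : is_axis mul xi eta a D.

Lemma ax_dd : is_direct_decomp D. Proof. by case: Ha. Qed.
Lemma ax_e0 x : M0 D x -> ad a x = 0 *: x.
Proof. by case: Ha => _ [h _ _ _] _ _ /h; rewrite scale0r. Qed.
Lemma ax_e1 x : M1 D x -> ad a x = 1 *: x.
Proof. by case: Ha => _ [_ h _ _] _ _ /h; rewrite scale1r. Qed.
Lemma ax_e2 x : M2 D x -> ad a x = xi *: x.
Proof. by case: Ha => _ [_ _ h _] _ _ /h. Qed.
Lemma ax_e3 x : M3 D x -> ad a x = eta *: x.
Proof. by case: Ha => _ [_ _ _ h] _ _ /h. Qed.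
Lemma ax_m1 x : M1 D x <-> exists c : F, x = c *: a.
Proof. by case: Ha => _ _ h _. Qed.

Lemma Tm_M0 x : M0 D x -> Tm a x = x.
Proof. by move/ax_e0/Tm_fix; apply; rewrite !mul0r. Qed.
Lemma Tm_M1 x : M1 D x -> Tm a x = x.
Proof. by move/ax_e1/Tm_fix; apply; rewrite subrr mulr0 mul0r. Qed.
Lemma Tm_M2 x : M2 D x -> Tm a x = x.
Proof. by move/ax_e2/Tm_fix; apply; rewrite subrr mulr0. Qed.
Lemma Tm_M3 x : M3 D x -> Tm a x = - x.
Proof.
move/ax_e3/Tm_eig => ->; rewrite kk_eta.
by rewrite -scaleN1r; congr (_ *: _); rewrite (_ : 2%:R = 1 + 1 :> F) // opprD addrA subrr sub0r.
Qed.

Lemma Tm_a : Tm a a = a.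
Proof. by apply: Tm_M1; apply/ax_m1; exists 1; rewrite scale1r. Qed.

Lemma Tm_miy : is_miyamoto D (Tm a).
Proof. split; [exact: Tm_lin | exact: Tm_M0 | exact: Tm_M1 | exact: Tm_M2 | exact: Tm_M3]. Qed.

Lemma ax_decomp x : exists x0 x1 x2 x3,
  [/\ M0 D x0, M1 D x1, M2 D x2, M3 D x3 & x = x0 + x1 + x2 + x3].
Proof. by case: ax_dd. Qed.

Lemma Tm_inv x : Tm a (Tm a x) = x.
Proof.
have [x0 [x1 [x2 [x3 [h0 h1 h2 h3 ->]]]]] := ax_decomp x.
have L := Tm_lin a.
rewrite (linD L (x0 + x1 + x2) x3) (linD L (x0 + x1) x2) (linD L x0 x1).
rewrite (Tm_M0 h0) (Tm_M1 h1) (Tm_M2 h2) (Tm_M3 h3).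
rewrite (linD L (x0 + x1 + x2) (- x3)) (linD L (x0 + x1) x2) (linD L x0 x1).
by rewrite (linN L) (Tm_M0 h0) (Tm_M1 h1) (Tm_M2 h2) (Tm_M3 h3) opprK.
Qed.

Definition Pm u v := Tm a (mul u v) = mul (Tm a u) (Tm a v).

Lemma Pm_sym u v : Pm u v -> Pm v u.
Proof. by rewrite /Pm mulC => ->; rewrite mulC. Qed.

Lemma Pm_Dl u u' v : Pm u v -> Pm u' v -> Pm (u + u') v.
Proof.
rewrite /Pm => h h'; have L := Tm_lin a.
by rewrite mulDl (linD L (mul u v)) h h' (linD L u) mulDl.
Qed.
Lemma Pm_Dr u v v' : Pm u v -> Pm u v' -> Pm u (v + v').
Proof. by move=> h h'; apply: Pm_sym; apply: Pm_Dl; apply: Pm_sym. Qed.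

Lemma Pm_M1 u v : M1 D u -> Pm u v.
Proof.
move=> hu; rewrite /Pm (Tm_M1 hu); case/ax_m1: hu => c ->.
rewrite !mulZl !(mulC a) -[mul v a]/(ad a v) -[mul (Tm a v) a]/(ad a (Tm a v)).
by rewrite (linZ (Tm_lin a)) Tm_ad.
Qed.

Lemma fix_sum2 (A B : V -> Prop) z : sum2 A B z ->
  (forall y, A y -> Tm a y = y) -> (forall y, B y -> Tm a y = y) -> Tm a z = z.
Proof.
by case=> y [w [hy [hw ->]]] hA hB; rewrite (linD (Tm_lin a)) hA // hB.
Qed.

Definition Comp u := [\/ M0 D u, M1 D u, M2 D u | M3 D u].

Lemma Pm_comp u v : Comp u -> Comp v -> Pm u v.
Proof.
case: Ha => _ _ _ [[f00 f01 f02 f03] f22 f23 f33].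
have P00 x y : M0 D x -> M0 D y -> Pm x y.
  by move=> hx hy; rewrite /Pm (Tm_M0 hx) (Tm_M0 hy) Tm_M0 //; apply: f00.
have P02 x y : M0 D x -> M2 D y -> Pm x y.
  by move=> hx hy; rewrite /Pm (Tm_M0 hx) (Tm_M2 hy) Tm_M2 //; apply: f02.
have P03 x y : M0 D x -> M3 D y -> Pm x y.
  by move=> hx hy; rewrite /Pm (Tm_M0 hx) (Tm_M3 hy) Tm_M3 ?mulNr //; apply: f03.
have P22 x y : M2 D x -> M2 D y -> Pm x y.
  move=> hx hy; rewrite /Pm (Tm_M2 hx) (Tm_M2 hy).
  by apply: (fix_sum2 (f22 _ _ hx hy)); [exact: Tm_M0 | exact: Tm_M1].
have P23 x y : M2 D x -> M3 D y -> Pm x y.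
  by move=> hx hy; rewrite /Pm (Tm_M2 hx) (Tm_M3 hy) Tm_M3 ?mulNr //; apply: f23.
have P33 x y : M3 D x -> M3 D y -> Pm x y.
  move=> hx hy; rewrite /Pm (Tm_M3 hx) (Tm_M3 hy) mulNl mulNr opprK.
  apply: (fix_sum2 (f33 _ _ hx hy)); last exact: Tm_M2.
  by move=> z hz; apply: (fix_sum2 hz); [exact: Tm_M0 | exact: Tm_M1].
case=> hu; case=> hv; (try by apply: Pm_M1); (try by apply: Pm_sym; apply: Pm_M1);
  (try by auto); by apply: Pm_sym; auto.
Qed.

Lemma Tm_mul : multf (Tm a).
Proof.
move=> x y; have [x0 [x1 [x2 [x3 [h0 h1 h2 h3 ->]]]]] := ax_decomp x.
have [y0 [y1 [y2 [y3 [k0 k1 k2 k3 ->]]]]] := ax_decomp y.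
have C0 : Comp x0 by constructor 1. have C1 : Comp x1 by constructor 2.
have C2 : Comp x2 by constructor 3. have C3 : Comp x3 by constructor 4.
have D0 : Comp y0 by constructor 1. have D1 : Comp y1 by constructor 2.
have D2 : Comp y2 by constructor 3. have D3 : Comp y3 by constructor 4.
by repeat apply: Pm_Dl; repeat apply: Pm_Dr; apply: Pm_comp.
Qed.

Lemma Tm_aut : is_aut mul (Tm a).
Proof.
split; [exact: Tm_lin | | exact: Tm_mul].
by exists (Tm a) => x; apply: Tm_inv.
Qed.

Lemma miy_unique f x : is_miyamoto D f -> f x = Tm a x.
Proof.
case=> fl f0 f1 f2 f3.
have [x0 [x1 [x2 [x3 [h0 h1 h2 h3 ->]]]]] := ax_decomp x.
have L := Tm_lin a.
rewrite (linD fl (x0 + x1 + x2) x3) (linD fl (x0 + x1) x2) (linD fl x0 x1).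
rewrite (linD L (x0 + x1 + x2) x3) (linD L (x0 + x1) x2) (linD L x0 x1).
by rewrite f0 // f1 // f2 // f3 // Tm_M0 // Tm_M1 // Tm_M2 // Tm_M3.
Qed.

End Axis.
End Nondeg.

Section Transport.
Variables h k : V -> V.
Hypotheses (hl : linf h) (hm : multf h) (hk : cancel h k) (kh : cancel k h).

Lemma kl : linf k.
Proof. by move=> c x y; apply: (can_inj hk); rewrite hl !kh. Qed.
Lemma km : multf k.
Proof. by move=> x y; apply: (can_inj hk); rewrite hm !kh. Qed.

Definition trD (D : decomp V) : decomp V :=
  Decomp (fun x => M0 D (k x)) (fun x => M1 D (k x)) (fun x => M2 D (k x)) (fun x => M3 D (k x)).

Lemma tr_sub (U : V -> Prop) : is_subspace U -> is_subspace (fun x => U (k x)).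
Proof.
case=> u0 [uD uZ]; split; first by rewrite (lin0 kl).
by split=> [x y hx hy|c x hx]; [rewrite (linD kl); apply: uD | rewrite (linZ kl); apply: uZ].
Qed.

Lemma tr_prod (A B C : V -> Prop) : prod_in mul A B C ->
  prod_in mul (fun x => A (k x)) (fun x => B (k x)) (fun x => C (k x)).
Proof. by move=> hP x y hx hy; rewrite km; apply: hP. Qed.

Lemma tr_sum2 (A B A' B' : V -> Prop) x : sum2 A B (k x) ->
  (forall y, A y -> A' (h y)) -> (forall y, B y -> B' (h y)) -> sum2 A' B' x.
Proof.
case=> y [z [hy [hz e]]] hA hB; exists (h y), (h z); split; [exact: hA | split; first exact: hB].
by rewrite -(linD hl) -e kh.
Qed.

Lemma tr_axis a D : is_axis mul xi eta a D -> is_axis mul xi eta (h a) (trD D).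
Proof.
case=> [[[s0 s1 s2 s3] dec un] [e0 e1 e2 e3] m1 [[f00 f01 f02 f03] f22 f23 f33]].
have hmk x : mul x (h a) = h (mul (k x) a) by rewrite hm kh.
split.
- split; first by split; apply: tr_sub.
    move=> x; have [x0 [x1 [x2 [x3 [h0 h1 h2 h3 ex]]]]] := dec (k x).
    exists (h x0), (h x1), (h x2), (h x3); split; rewrite /= ?hk //.
    by rewrite -[x]kh ex !(linD hl).
  move=> x0 x1 x2 x3 /= h0 h1 h2 h3 e.
  have e' : k x0 + k x1 + k x2 + k x3 = 0 by rewrite -!(linD kl) e (lin0 kl).
  case: (un _ _ _ _ h0 h1 h2 h3 e') => z0 z1 z2 z3.
  by split; [rewrite -[x0]kh z0 | rewrite -[x1]kh z1 | rewrite -[x2]kh z2 | rewrite -[x3]kh z3];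
    rewrite (lin0 hl).
- split=> x /= hx; rewrite hmk.
  + by rewrite e0 // (lin0 hl).
  + by rewrite e1 // kh.
  + by rewrite e2 // (linZ hl) kh.
  + by rewrite e3 // (linZ hl) kh.
- move=> x /=; split.
    by case/m1 => c e; exists c; rewrite -[x]kh e (linZ hl).
  by case=> c ->; apply/m1; exists c; rewrite (linZ kl) hk.
- split; first by split; apply: tr_prod.
  + move=> x y hx hy; apply: (tr_sum2 (A := M0 D) (B := M1 D)).
    * by rewrite km; apply: f22.
    * by move=> z /=; rewrite hk.
    * by move=> z /=; rewrite hk.
  + exact: tr_prod.
  + move=> x y hx hy; apply: (tr_sum2 (A := sum2 (M0 D) (M1 D)) (B := M2 D)).
    * by rewrite km; apply: f33.
    * move=> z hz; apply: (tr_sum2 (A := M0 D) (B := M1 D)); first by rewrite hk.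
        by move=> w /=; rewrite hk.
      by move=> w /=; rewrite hk.
    * by move=> z /=; rewrite hk.
Qed.

Lemma tr_miy D f : is_miyamoto D f -> is_miyamoto (trD D) (fun x => h (f (k x))).
Proof.
case=> fl f0 f1 f2 f3; split=> /=.
- exact: (linf_comp hl (linf_comp fl kl)).
- by move=> x hx; rewrite f0 // kh.
- by move=> x hx; rewrite f1 // kh.
- by move=> x hx; rewrite f2 // kh.
- by move=> x hx; rewrite f3 // (linN hl) kh.
Qed.
End Transport.

Section Powers.
Variables s g : V -> V.
Hypotheses (sg : cancel s g) (gs : cancel g s).

Definition pw (i : int) : V -> V :=
  match i with Posz n => iter n s | Negz n => iter n.+1 g end.

Lemma pw0 x : pw 0 x = x. Proof. by []. Qed.

Lemma pwS i x : pw (i + 1) x = s (pw i x).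
Proof.
case: i => [n|[|m]].
- by rewrite (_ : Posz n + 1 = Posz n.+1) //; lia.
- by rewrite (_ : Negz 0 + 1 = 0) /= ?gs //; rewrite NegzE; lia.
- rewrite (_ : Negz m.+1 + 1 = Negz m); last by rewrite !NegzE; lia.
  by rewrite /= gs.
Qed.

Lemma pwP i x : pw (i - 1) x = g (pw i x).
Proof. by rewrite -[in RHS](subrK 1 i) pwS sg. Qed.

Lemma pwD i j x : pw (i + j) x = pw i (pw j x).
Proof.
elim/int_rect: i j x => [|n IH|n IH] j x.
- by rewrite add0r.
- rewrite (_ : (n.+1 : int) + j = ((n : int) + j) + 1); last by lia.
  by rewrite pwS IH.
- rewrite (_ : - (n.+1 : int) + j = (- (n : int) + j) - 1); last by lia.
  rewrite pwP IH (_ : - (n.+1 : int) = - (n : int) - 1); last by lia.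
  by rewrite pwP.
Qed.

Lemma pwN i x : pw (- i) (pw i x) = x.
Proof. by rewrite -pwD addNr. Qed.
Lemma pwN' i x : pw i (pw (- i) x) = x.
Proof. by rewrite -pwD subrr. Qed.

Lemma pw_good i : linf s -> linf g -> multf s -> multf g -> linf (pw i) /\ multf (pw i).
Proof.
move=> sl gl sm gm; case: i => n /=.
- elim: n => [|n [IH1 IH2]] //=; split; first exact: (linf_comp sl IH1).
  exact: (multf_comp sm IH2).
- elim: n => [|n [IH1 IH2]] //=; split; first exact: (linf_comp gl IH1).
  exact: (multf_comp gm IH2).
Qed.

Lemma pw_conj (t : V -> V) : (forall x, t (s x) = g (t x)) -> (forall x, t (g x) = s (t x)) ->
  forall i x, t (pw i x) = pw (- i) (t x).
Proof.
move=> hs hg i; elim/int_rect: i => [|n IH|n IH] x.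
- by rewrite oppr0.
- rewrite (_ : (n.+1 : int) = (n : int) + 1); last by lia.
  rewrite pwS hs IH (_ : - ((n : int) + 1) = - (n : int) - 1); last by lia.
  by rewrite pwP.
- rewrite (_ : - (n.+1 : int) = - (n : int) - 1); last by lia.
  rewrite pwP hg IH (_ : - (- (n : int) - 1) = - - (n : int) + 1); last by lia.
  by rewrite pwS.
Qed.
End Powers.
End Basics.

Theorem proposition2 (F : fieldType) (V : lmodType F) (mul : V -> V -> V)
    (xi eta : F) :
  (2%:R : F) != 0 ->
  xi != 0 -> xi != 1 -> eta != 0 -> eta != 1 -> xi != eta ->
  is_cna mul ->
  is_axial_decomp_majorana mul xi eta ->
  is_dihedral mul xi eta <->
  exists (a b : V) (Da Db : decomp V),
    [/\ is_axis mul xi eta a Da, is_axis mul xi eta b Db,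
        generates mul (fun x => x = a \/ x = b) &
        exists phi, is_aut mul phi /\ phi a = b /\ phi b = a].
Proof.
move=> two0 xi0 xi1 eta0 eta1 xieta cna _.
split.
- case=> ai [Di [Hax Hgen [phi [Hphi Hsh]] HD3]].
  have Tj j i : Tm mul xi eta (ai j) (ai i) = ai (2 * j - i).
    exact: HD3 (Tm_miy cna eta0 eta1 xieta (Hax j)) i.
  exists (ai 0), (ai 1), (Di 0), (Di 1); split; [exact: Hax | exact: Hax | |].
  + move=> U hU hP hS; apply: Hgen => // x [i ->].
    have hpos (n : nat) : U (ai n) /\ U (ai n.+1).
      elim: n => [|n [IH1 IH2]]; first by split; apply: hS; [left|right].
      split=> //.
      have -> : (n.+2 : int) = 2 * (n.+1 : int) - (n : int) by lia.
      by rewrite -Tj; apply: Tm_sub.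
    case: i => n; first exact: (hpos n).1.
    have -> : Negz n = 2 * 0 - (n.+1 : int) by rewrite NegzE; lia.
    by rewrite -Tj; apply: Tm_sub => //; [exact: (hpos 0%N).1 | exact: (hpos n).2].
  + exists (fun x => phi (Tm mul xi eta (ai 0) x)); split.
      exact: (is_aut_comp Hphi (Tm_aut cna eta0 eta1 xieta (Hax 0))).
    rewrite !Tj; split.
      by rewrite (_ : 2 * 0 - 0 = 0 :> int) // Hsh.
    by rewrite (_ : 2 * 0 - 1 = -1 :> int) // Hsh.
- case=> a [b [Da [Db [Ha Hb Hgen [phi [[phil phib phim] [pa pb]]]]]]].
  have phi2 x : phi (phi x) = x.
    apply: (Hgen (fun x => phi (phi x) = x)) => //.
    * split; first by rewrite !(lin0 phil).
      by split=> [u v hu hv|c u hu]; rewrite ?(linD phil) ?(linZ phil) ?hu ?hv.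
    * by move=> u v hu hv; rewrite !phim hu hv.
    * by move=> u [->|->]; rewrite ?pa ?pb.
  set Ta := Tm mul xi eta a.
  have [Tl _ Tmu] := Tm_aut cna eta0 eta1 xieta Ha.
  have Tinv : forall x, Ta (Ta x) = x := Tm_inv cna eta0 eta1 xieta Ha.
  pose s x := phi (Ta x). pose g x := Ta (phi x).
  have sg : cancel s g by move=> x; rewrite /s /g phi2 Tinv.
  have gs : cancel g s by move=> x; rewrite /s /g Tinv phi2.
  have sl : linf s := linf_comp phil Tl.
  have gl : linf g := linf_comp Tl phil.
  have sm : multf mul s := multf_comp phim Tmu.
  have gm : multf mul g := multf_comp Tmu phim.
  pose ai i := pw s g i a.
  pose Di i := trD (pw s g (- i)) Da.
  have good i := pw_good (mul := mul) i sl gl sm gm.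
  have Hax i : is_axis mul xi eta (ai i) (Di i).
    case: (good i) => l m.
    exact: (tr_axis l m (pwN sg gs i) (pwN' sg gs i) Ha).
  exists ai, Di; split.
  + exact: Hax.
  + move=> U hU hP hS; apply: Hgen => // x [->|->]; apply: hS.
      by exists 0.
    exists 1; rewrite /ai; change (b = s a).
    by rewrite /s /Ta (Tm_a cna Ha) pa.
  + exists s; split; first by split => //; exists g.
    by move=> i; rewrite /ai (pwS gs).
  + move=> j tau Htau i.
    have [lj _] := good j.
    have Hm2 := tr_miy lj (pwN sg gs j) (pwN' sg gs j) (Tm_miy cna eta0 eta1 xieta Ha).
    rewrite (miy_unique cna eta0 eta1 xieta (Hax j) (ai i) Htau).
    rewrite -(miy_unique cna eta0 eta1 xieta (Hax j) (ai i) Hm2) /ai -(pwD sg gs).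
    have hs x : Ta (s x) = g (Ta x) by [].
    have hg x : Ta (g x) = s (Ta x) by rewrite /g /s !Tinv.
    rewrite -/Ta (pw_conj sg gs hs hg) /Ta (Tm_a cna Ha) -(pwD sg gs).
    by rewrite (_ : j + - (- j + i) = 2 * j - i) //; lia.
Qed.
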